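(* Let $0<\beta<\frac12$ and for $z\in\mathbb{C}$ with $|\Re(z)|\neq\beta$ set $$I(\beta,1;z)=\frac{1}{2\pi i}\int_{\beta-i\infty}^{\beta+i\infty}\left(\frac{\cos\pi z}{\cos\pi w}\right)\left(\frac{2w}{z^2-w^2}\right)\mathrm{d}w.$$ Then $I(\beta,1;z)=0$ for all $z$ with $\Re(z)>\beta$. *)

(* Defs.v *)
From Stdlib Require Import Reals.
From Coquelicot Require Import Coquelicot.
Open Scope R_scope.

Definition Cexp (z : C) : C :=
  (exp (Re z) * cos (Im z), exp (Re z) * sin (Im z)).

Definition Ccos (z : C) : C :=
  ((Cexp (Ci * z) + Cexp (- (Ci * z))) / 2)%C.

Definition I_kernel (z w : C) : C :=
  ((Ccos (RtoC PI * z) / Ccos (RtoC PI * w)) * ((2 * w) / (z * z - w * w)))%C.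

(* The vertical line is
   parametrized by w = beta + i t, t in R, so dw = i dt. *)
Definition is_I_beta1 (beta : R) (z : C) (v : C) : Prop :=
  is_RInt_gen
    (fun t : R => (/ (2 * RtoC PI * Ci) * (I_kernel z (RtoC beta + Ci * RtoC t) * Ci))%C)
    (Rbar_locally m_infty) (Rbar_locally p_infty) v.

(* Main.v *)
Require Import Defs.
From Stdlib Require Import Reals.
From Coquelicot Require Import Coquelicot.
From Stdlib Require Import Lra.
Open Scope R_scope.


Lemma D_eq (f : R -> R) (x a b : R) : is_derive f x a -> a = b -> is_derive f x b.
Proof. intros H ->; exact H. Qed.
Lemma D_ext (f g : R -> R) x a : (forall t, f t = g t) -> is_derive f x a -> is_derive g x a.
Proof. intros H1 H2. eapply is_derive_ext; eauto. Qed.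
Lemma D_plus (f g : R -> R) x a b : is_derive f x a -> is_derive g x b ->
  is_derive (fun t => f t + g t) x (a + b).
Proof. intros; now apply (is_derive_plus f g). Qed.
Lemma D_minus (f g : R -> R) x a b : is_derive f x a -> is_derive g x b ->
  is_derive (fun t => f t - g t) x (a - b).
Proof. intros; now apply (is_derive_minus f g). Qed.
Lemma D_opp (f : R -> R) x a : is_derive f x a -> is_derive (fun t => - f t) x (- a).
Proof. intros; now apply (is_derive_opp f). Qed.
Lemma D_mult (f g : R -> R) x a b : is_derive f x a -> is_derive g x b ->
  is_derive (fun t => f t * g t) x (a * g x + f x * b).
Proof. intros; now apply Derive.is_derive_mult. Qed.
Lemma D_inv (f : R -> R) x a : is_derive f x a -> f x <> 0 ->
  is_derive (fun t => / f t) x (- a / f x ^ 2).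
Proof. intros; now apply is_derive_inv. Qed.
Lemma D_id x : is_derive (fun t : R => t) x 1.
Proof. apply (is_derive_id (K:=R_AbsRing)). Qed.
Lemma D_const (c : R) x : is_derive (fun _ => c) x 0.
Proof. apply (is_derive_const c x). Qed.
Lemma D_exp (f : R -> R) x a : is_derive f x a -> is_derive (fun t => exp (f t)) x (a * exp (f x)).
Proof. intros H. apply (is_derive_comp exp f x (exp (f x)) a); auto. apply is_derive_exp. Qed.
Lemma D_cos (f : R -> R) x a : is_derive f x a -> is_derive (fun t => cos (f t)) x (a * - sin (f x)).
Proof. intros H. apply (is_derive_comp cos f x (- sin (f x)) a); auto. apply is_derive_cos. Qed.
Lemma D_sin (f : R -> R) x a : is_derive f x a -> is_derive (fun t => sin (f t)) x (a * cos (f x)).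
Proof. intros H. apply (is_derive_comp sin f x (cos (f x)) a); auto. apply is_derive_sin. Qed.

Definition cont2 (F : R -> R -> C) x y :=
  continuity_2d_pt (fun u v => fst (F u v)) x y /\ continuity_2d_pt (fun u v => snd (F u v)) x y.

Definition Hol (O : R -> R -> Prop) (F G : R -> R -> C) : Prop :=
  forall x y, O x y ->
  is_derive (fun u => fst (F u y)) x (fst (G x y)) /\
  is_derive (fun u => snd (F u y)) x (snd (G x y)) /\
  is_derive (fun v => fst (F x v)) y (- snd (G x y)) /\
  is_derive (fun v => snd (F x v)) y (fst (G x y)) /\
  cont2 F x y /\ cont2 G x y.

Definition HolE O F := exists G, Hol O F G.

Ltac cunf := unfold Cmult, Cplus, Copp, Cminus, Cdiv, Cinv, RtoC, Ci, Cexp, Re, Im in *; simpl fst in *; simpl snd in *.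

Ltac hsplit := refine (conj _ (conj _ (conj _ (conj _ (conj (conj _ _) (conj _ _)))))).

Lemma C2_ext (f g : R -> R -> R) x y : (forall u v, f u v = g u v) -> continuity_2d_pt f x y -> continuity_2d_pt g x y.
Proof. intros; eapply continuity_2d_pt_ext; eauto. Qed.

Lemma HolE_const O c : HolE O (fun _ _ => c).
Proof.
  exists (fun _ _ => 0%C). intros x y _. cunf.
  hsplit; try apply continuity_2d_pt_const.
  - apply D_const.
  - apply D_const.
  - apply D_eq with (a:=0); [apply D_const|]. simpl. ring.
  - apply D_const.
Qed.

Lemma HolE_w O : HolE O (fun u v => (RtoC u + Ci * RtoC v)%C).
Proof.
  exists (fun _ _ => 1%C). intros x y _. cunf.
  hsplit.
  - eapply D_ext. 2: apply D_id. intros; simpl; ring.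
  - apply D_ext with (fun _ => y). intros; simpl; ring. apply D_const.
  - apply D_ext with (fun _ => x). intros; simpl; ring. apply D_eq with (a:=0); [apply D_const|ring].
  - eapply D_ext. 2: apply D_id. intros; simpl; ring.
  - eapply C2_ext. 2: apply continuity_2d_pt_id1. intros; simpl; ring.
  - eapply C2_ext. 2: apply continuity_2d_pt_id2. intros; simpl; ring.
  - apply continuity_2d_pt_const.
  - apply continuity_2d_pt_const.
Qed.

Lemma HolE_plus O F1 F2 : HolE O F1 -> HolE O F2 -> HolE O (fun u v => F1 u v + F2 u v)%C.
Proof.
  intros [G1 H1] [G2 H2]. exists (fun u v => G1 u v + G2 u v)%C. intros x y Hxy.
  destruct (H1 x y Hxy) as (a1&a2&a3&a4&[c1 c2]&[d1 d2]).
  destruct (H2 x y Hxy) as (b1&b2&b3&b4&[e1 e2]&[f1 f2]).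
  cunf. hsplit.
  - now apply D_plus.
  - now apply D_plus.
  - eapply D_eq; [apply D_plus; eassumption|ring].
  - now apply D_plus.
  - now apply continuity_2d_pt_plus.
  - now apply continuity_2d_pt_plus.
  - now apply continuity_2d_pt_plus.
  - now apply continuity_2d_pt_plus.
Qed.

Lemma HolE_opp O F1 : HolE O F1 -> HolE O (fun u v => - F1 u v)%C.
Proof.
  intros [G1 H1]. exists (fun u v => - G1 u v)%C. intros x y Hxy.
  destruct (H1 x y Hxy) as (a1&a2&a3&a4&[c1 c2]&[d1 d2]).
  cunf. hsplit; try (apply continuity_2d_pt_opp; assumption); try (apply D_opp; assumption).
Qed.

Lemma HolE_mult O F1 F2 : HolE O F1 -> HolE O F2 -> HolE O (fun u v => F1 u v * F2 u v)%C.
Proof.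
  intros [G1 H1] [G2 H2]. exists (fun u v => G1 u v * F2 u v + F1 u v * G2 u v)%C. intros x y Hxy.
  destruct (H1 x y Hxy) as (a1&a2&a3&a4&[c1 c2]&[d1 d2]).
  destruct (H2 x y Hxy) as (b1&b2&b3&b4&[e1 e2]&[f1 f2]).
  cunf. hsplit.
  - eapply D_eq. apply D_minus; apply D_mult; eauto. cbv beta; ring.
  - eapply D_eq. apply D_plus; apply D_mult; eauto. cbv beta; ring.
  - eapply D_eq. apply D_minus; apply D_mult; eauto. cbv beta; ring.
  - eapply D_eq. apply D_plus; apply D_mult; eauto. cbv beta; ring.
  - apply continuity_2d_pt_minus; apply continuity_2d_pt_mult; auto.
  - apply continuity_2d_pt_plus; apply continuity_2d_pt_mult; auto.
  - apply continuity_2d_pt_plus; apply continuity_2d_pt_minus; apply continuity_2d_pt_mult; auto.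
  - apply continuity_2d_pt_plus; apply continuity_2d_pt_plus; apply continuity_2d_pt_mult; auto.
Qed.

Lemma C_nz (c : C) : c <> 0%C -> fst c * fst c + snd c * snd c <> 0.
Proof.
  intros H E. apply H. destruct c as [a b]; simpl in *.
  assert (a = 0) by nra. assert (b = 0) by nra. subst. reflexivity.
Qed.

Lemma div_sq a b c : c * / (a*a+b*b) = c / (a^2+b^2).
Proof. unfold Rdiv. replace (a^2+b^2) with (a*a+b*b) by ring. reflexivity. Qed.

Lemma cont2_plus F1 F2 x y : cont2 F1 x y -> cont2 F2 x y -> cont2 (fun u v => F1 u v + F2 u v)%C x y.
Proof. intros [] []; cunf; split; now apply continuity_2d_pt_plus. Qed.
Lemma cont2_opp F1 x y : cont2 F1 x y -> cont2 (fun u v => - F1 u v)%C x y.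
Proof. intros []; cunf; split; now apply continuity_2d_pt_opp. Qed.
Lemma cont2_mult F1 F2 x y : cont2 F1 x y -> cont2 F2 x y -> cont2 (fun u v => F1 u v * F2 u v)%C x y.
Proof.
  intros [] []; cunf; split.
  - apply continuity_2d_pt_minus; apply continuity_2d_pt_mult; auto.
  - apply continuity_2d_pt_plus; apply continuity_2d_pt_mult; auto.
Qed.
Lemma cont2_inv F x y : cont2 F x y -> F x y <> 0%C -> cont2 (fun u v => / F u v)%C x y.
Proof.
  intros [c1 c2] Hn. pose proof (C_nz _ Hn) as Hd. cunf. split.
  - eapply C2_ext with (f := fun u v => fst (F u v) * / (fst (F u v) * fst (F u v) + snd (F u v) * snd (F u v))).
    intros; apply div_sq.
    apply continuity_2d_pt_mult; auto. apply continuity_2d_pt_inv; auto.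
    apply continuity_2d_pt_plus; apply continuity_2d_pt_mult; auto.
  - eapply C2_ext with (f := fun u v => - snd (F u v) * / (fst (F u v) * fst (F u v) + snd (F u v) * snd (F u v))).
    intros; apply div_sq.
    apply continuity_2d_pt_mult; auto. apply continuity_2d_pt_opp; auto. apply continuity_2d_pt_inv; auto.
    apply continuity_2d_pt_plus; apply continuity_2d_pt_mult; auto.
Qed.
Lemma cont2_exp F x y : cont2 F x y -> cont2 (fun u v => Cexp (F u v)) x y.
Proof.
  intros [c1 c2]. cunf. split; apply continuity_2d_pt_mult.
  - apply continuity_1d_2d_pt_comp; auto. apply derivable_continuous_pt, derivable_pt_exp.
  - apply continuity_1d_2d_pt_comp; auto. apply derivable_continuous_pt, derivable_pt_cos.
  - apply continuity_1d_2d_pt_comp; auto. apply derivable_continuous_pt, derivable_pt_exp.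
  - apply continuity_1d_2d_pt_comp; auto. apply derivable_continuous_pt, derivable_pt_sin.
Qed.

Lemma HolE_exp O F : HolE O F -> HolE O (fun u v => Cexp (F u v)).
Proof.
  intros [G H]. exists (fun u v => Cexp (F u v) * G u v)%C. intros x y Hxy.
  destruct (H x y Hxy) as (a1&a2&a3&a4&c&d).
  refine (conj _ (conj _ (conj _ (conj _ (conj (cont2_exp _ _ _ c) (cont2_mult _ _ _ _ (cont2_exp _ _ _ c) d)))))); cunf.
  - eapply D_eq. apply D_mult. apply D_exp; eauto. apply D_cos; eauto. cbv beta; ring.
  - eapply D_eq. apply D_mult. apply D_exp; eauto. apply D_sin; eauto. cbv beta; ring.
  - eapply D_eq. apply D_mult. apply D_exp; eauto. apply D_cos; eauto. cbv beta; ring.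
  - eapply D_eq. apply D_mult. apply D_exp; eauto. apply D_sin; eauto. cbv beta; ring.
Qed.

Lemma HolE_inv O F : HolE O F -> (forall x y, O x y -> F x y <> 0%C) -> HolE O (fun u v => / F u v)%C.
Proof.
  intros [G H] Hnz. exists (fun u v => - (G u v * (/ F u v * / F u v)))%C. intros x y Hxy.
  destruct (H x y Hxy) as (a1&a2&a3&a4&c&d).
  pose proof (Hnz x y Hxy) as Hn. pose proof (C_nz _ Hn) as Hd.
  refine (conj _ (conj _ (conj _ (conj _ (conj (cont2_inv _ _ _ c Hn) _))))).
  - cunf. apply D_ext with (fun u => fst (F u y) * / (fst (F u y) * fst (F u y) + snd (F u y) * snd (F u y))).
    intros; apply div_sq.
    eapply D_eq. apply D_mult. eauto. apply D_inv; auto. apply D_plus; apply D_mult; eauto.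
    cbv beta. field; repeat split; try assumption; replace (fst (F x y) ^ 2 + snd (F x y) ^ 2) with (fst (F x y) * fst (F x y) + snd (F x y) * snd (F x y)) by ring; assumption.
  - cunf. apply D_ext with (fun u => - snd (F u y) * / (fst (F u y) * fst (F u y) + snd (F u y) * snd (F u y))).
    intros; apply div_sq.
    eapply D_eq. apply D_mult. apply D_opp; eauto. apply D_inv; auto. apply D_plus; apply D_mult; eauto.
    cbv beta. field; repeat split; try assumption; replace (fst (F x y) ^ 2 + snd (F x y) ^ 2) with (fst (F x y) * fst (F x y) + snd (F x y) * snd (F x y)) by ring; assumption.
  - cunf. apply D_ext with (fun u => fst (F x u) * / (fst (F x u) * fst (F x u) + snd (F x u) * snd (F x u))).
    intros; apply div_sq.
    eapply D_eq. apply D_mult. eauto. apply D_inv; auto. apply D_plus; apply D_mult; eauto.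
    cbv beta. field; repeat split; try assumption; replace (fst (F x y) ^ 2 + snd (F x y) ^ 2) with (fst (F x y) * fst (F x y) + snd (F x y) * snd (F x y)) by ring; assumption.
  - cunf. apply D_ext with (fun u => - snd (F x u) * / (fst (F x u) * fst (F x u) + snd (F x u) * snd (F x u))).
    intros; apply div_sq.
    eapply D_eq. apply D_mult. apply D_opp; eauto. apply D_inv; auto. apply D_plus; apply D_mult; eauto.
    cbv beta. field; repeat split; try assumption; replace (fst (F x y) ^ 2 + snd (F x y) ^ 2) with (fst (F x y) * fst (F x y) + snd (F x y) * snd (F x y)) by ring; assumption.
  - apply cont2_opp, cont2_mult; auto. apply cont2_mult; apply cont2_inv; auto.
Qed.


Lemma c2_v f x y : continuity_2d_pt f x y -> continuous (fun v => f x v) y.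
Proof.
  intros H. apply filterlim_locally. intros eps. destruct (H eps) as [d Hd].
  exists d. intros v Hv. apply Hd.
  - rewrite Rminus_eq_0, Rabs_R0; apply cond_pos.
  - exact Hv.
Qed.

Lemma c2_u f x y : continuity_2d_pt f x y -> continuous (fun u => f u y) x.
Proof.
  intros H. apply filterlim_locally. intros eps. destruct (H eps) as [d Hd].
  exists d. intros v Hv. apply Hd.
  - exact Hv.
  - rewrite Rminus_eq_0, Rabs_R0; apply cond_pos.
Qed.

Lemma locally_open (c d s : R) : c < s < d -> locally s (fun y => c < y < d).
Proof.
  intros [H1 H2]. apply (locally_interval _ s (Finite c) (Finite d)); simpl; auto.
Qed.

Lemma rect (U V P : R -> R -> R) (c d x0 x1 a b : R) :
  c < x0 -> x0 < x1 -> x1 < d ->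
  (forall x t, c < x < d -> is_derive (fun u => U u t) x (P x t)) ->
  (forall x t, c < x < d -> is_derive (fun v => V x v) t (P x t)) ->
  (forall x t, c < x < d -> continuity_2d_pt P x t) ->
  (forall x t, c < x < d -> continuity_2d_pt U x t) ->
  (forall x t, c < x < d -> continuity_2d_pt V x t) ->
  RInt (fun t => U x1 t) a b - RInt (fun t => U x0 t) a b = RInt (fun x => V x b - V x a) x0 x1.
Proof.
  intros Hc0 H01 H1d HU HV HP CU CV.
  set (W := fun x => V x b - V x a).
  assert (CW : forall x, c < x < d -> continuous W x).
  { intros x Hx. unfold W. apply (continuous_minus (fun x => V x b) (fun x => V x a)); apply c2_u; auto. }
  set (Phi := fun s => RInt (fun t => U s t) a b - RInt W x0 s).
  assert (D : forall s, x0 <= s <= x1 -> is_derive Phi s 0).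
  { intros s Hs. assert (Hs' : c < s < d) by lra.
    apply D_eq with (a := (V s b - V s a) - W s); [| unfold W; ring].
    apply D_minus.
    - assert (E : RInt (fun t => Derive (fun u => U u t) s) a b = V s b - V s a).
      { rewrite (RInt_ext _ (P s)).
        2: { intros t _. apply is_derive_unique. auto. }
        apply is_RInt_unique.
        apply (is_RInt_derive (V s) (P s)).
        - intros t _. auto.
        - intros t _. apply c2_v; auto. }
      rewrite <- E.
      apply is_derive_RInt_param.
      + generalize (locally_open c d s Hs'). apply filter_imp.
        intros y Hy t _. eexists. apply HU. auto.
      + intros t _.
        apply continuity_2d_pt_ext_loc with (f := P); auto.
        assert (Hd : 0 < Rmin (s - c) (d - s)) by (apply Rmin_case; lra).
        exists (mkposreal _ Hd). intros u v Hu Hv. simpl in Hu.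
        assert (c < u < d).
        { revert Hu. apply Rmin_case_strong; intros; apply Rabs_def2 in Hu; lra. }
        symmetry. apply is_derive_unique. auto.
      + generalize (locally_open c d s Hs'). apply filter_imp.
        intros y Hy. apply (ex_RInt_continuous (V:=R_CompleteNormedModule)). intros t _. apply c2_v; auto.
    - apply (is_derive_RInt W (fun s => RInt W x0 s) x0 s).
      + generalize (locally_open c d s Hs'). apply filter_imp.
        intros y Hy. apply (RInt_correct (V:=R_CompleteNormedModule)). apply (ex_RInt_continuous (V:=R_CompleteNormedModule)).
        intros t Ht. apply CW. split.
        * apply Rlt_le_trans with (Rmin x0 y). apply Rmin_case; lra. apply Ht.
        * apply Rle_lt_trans with (Rmax x0 y). apply Ht. apply Rmax_case; lra.
      + apply CW; auto. }
  pose proof (eq_is_derive Phi x0 x1 D H01) as E.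
  unfold Phi in E. rewrite RInt_point in E.
  change (@zero R_CompleteNormedModule) with 0 in E. lra.
Qed.


Lemma w_eq s t : (RtoC s + Ci * RtoC t)%C = (s, t).
Proof. cunf. f_equal; ring. Qed.

Lemma Ccos_w s t : Ccos (RtoC PI * (RtoC s + Ci * RtoC t)) =
  (cos (PI*s) * ((exp (PI*t) + exp (-(PI*t)))/2), - (sin (PI*s) * ((exp (PI*t) - exp (-(PI*t)))/2))).
Proof.
  rewrite w_eq. unfold Ccos.
  replace (Ci * (RtoC PI * (s, t)))%C with (((-(PI*t))%R, (PI*s)%R) : C) by (cunf; f_equal; ring).
  replace (- ((-(PI*t))%R, (PI*s)%R))%C with (((PI*t)%R, (-(PI*s))%R) : C) by (cunf; f_equal; ring).
  unfold Cexp, Re, Im. simpl fst; simpl snd. rewrite cos_neg, sin_neg.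
  cunf. unfold Cmult; simpl. f_equal; field.
Qed.

Lemma Ccos_opp u : Ccos (- u) = Ccos u.
Proof.
  unfold Ccos. replace (Ci * - u)%C with (- (Ci * u))%C by ring.
  replace (- - (Ci * u))%C with (Ci * u)%C by ring. f_equal. ring.
Qed.

Lemma cos_pos_half s : -1/2 < s < 1/2 -> 0 < cos (PI * s).
Proof.
  intros H. apply cos_gt_0; pose proof PI_RGT_0; nra.
Qed.

Lemma Ccos_nz s t : -1/2 < s < 1/2 -> Ccos (RtoC PI * (RtoC s + Ci * RtoC t)) <> 0%C.
Proof.
  intros H E. rewrite Ccos_w in E. apply (f_equal fst) in E. simpl in E.
  pose proof (cos_pos_half s H). pose proof (exp_pos (PI*t)). pose proof (exp_pos (-(PI*t))).
  assert (0 < cos (PI * s) * ((exp (PI * t) + exp (- (PI * t))) / 2)).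
  { apply Rmult_lt_0_compat; lra. }
  lra.
Qed.

Lemma zw_nz z s t : Rabs s < Re z ->
  (z * z + - ((RtoC s + Ci * RtoC t) * (RtoC s + Ci * RtoC t)))%C <> 0%C.
Proof.
  intros Hs E. rewrite w_eq in E.
  assert (E2 : ((z - (s,t)) * (z + (s,t)))%C = 0%C).
  { rewrite <- E. ring. }
  apply (f_equal Cmod) in E2. rewrite Cmod_mult, Cmod_0 in E2.
  apply Rmult_integral in E2. destruct E2 as [E2|E2]; apply Cmod_eq_0 in E2;
    apply (f_equal fst) in E2; destruct z as [z1 z2]; unfold Re in Hs; simpl in *;
    apply Rabs_def2 in Hs; lra.
Qed.

Lemma HolE_Ccos O F : HolE O F -> HolE O (fun u v => Ccos (F u v)).
Proof.
  intros H. unfold Ccos, Cdiv. apply HolE_mult; [|apply HolE_const].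
  apply HolE_plus; apply HolE_exp.
  - apply HolE_mult; auto. apply HolE_const.
  - apply HolE_opp, HolE_mult; auto. apply HolE_const.
Qed.

Definition Fk (z : C) (s t : R) : C :=
  (/ (2 * RtoC PI * Ci) * (I_kernel z (RtoC s + Ci * RtoC t) * Ci))%C.


Lemma HolE_F z b1 : b1 < 1/2 -> b1 < Re z -> HolE (fun x y => -b1 < x < b1) (Fk z).
Proof.
  intros H1 H2. unfold Fk, I_kernel, Cdiv, Cminus.
  apply HolE_mult; [apply HolE_const|].
  apply HolE_mult; [|apply HolE_const].
  apply HolE_mult; apply HolE_mult.
  - apply HolE_const.
  - apply HolE_inv. apply HolE_Ccos. apply HolE_mult. apply HolE_const. apply HolE_w.
    intros x y Hx. apply Ccos_nz. lra.
  - apply HolE_mult; [apply HolE_const|apply HolE_w].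
  - apply HolE_inv. apply HolE_plus. apply HolE_const. apply HolE_opp, HolE_mult; apply HolE_w.
    intros x y Hx. apply zw_nz. apply Rabs_def1; lra.
Qed.

Lemma Fk_odd z s t : Fk z (-s) (-t) = (- Fk z s t)%C.
Proof.
  unfold Fk, I_kernel.
  replace (RtoC (-s) + Ci * RtoC (-t))%C with (- (RtoC s + Ci * RtoC t))%C by (cunf; f_equal; ring).
  set (w := (RtoC s + Ci * RtoC t)%C).
  replace (RtoC PI * - w)%C with (- (RtoC PI * w))%C by ring.
  rewrite Ccos_opp. unfold Cdiv.
  replace (z * z - - w * - w)%C with (z * z - w * w)%C by ring. ring.
Qed.


Lemma PI_gt3 : 3 < PI.
Proof. pose proof PI2_3_2. lra. Qed.

Lemma sh_bound t : t * t <= ((exp (PI*t) - exp (-(PI*t)))/2) * ((exp (PI*t) - exp (-(PI*t)))/2).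
Proof.
  pose proof PI_gt3.
  assert (K : forall u, 0 <= u -> u <= (exp (PI*u) - exp (-(PI*u)))/2).
  { intros u Hu. pose proof (exp_ineq1_le (PI*u)).
    assert (exp (-(PI*u)) <= 1).
    { rewrite <- exp_0. destruct (Req_dec u 0). subst. rewrite Rmult_0_r, Ropp_0. lra.
      left. apply exp_increasing. nra. }
    nra. }
  destruct (Rle_or_lt 0 t).
  - pose proof (K t H0). nra.
  - pose proof (K (-t) ltac:(lra)).
    replace (PI * - t) with (-(PI*t)) in H1 by ring. rewrite Ropp_involutive in H1. nra.
Qed.

Lemma Ccos_lb s t : Rabs t <= Cmod (Ccos (RtoC PI * (RtoC s + Ci * RtoC t))).
Proof.
  rewrite Ccos_w. unfold Cmod. simpl fst; simpl snd.
  set (ch := (exp (PI*t) + exp (-(PI*t)))/2).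
  set (sh := (exp (PI*t) - exp (-(PI*t)))/2).
  assert (Hcs : sh * sh <= ch * ch).
  { unfold ch, sh. pose proof (exp_pos (PI*t)). pose proof (exp_pos (-(PI*t))). nra. }
  pose proof (sh_bound t) as Hs. fold sh in Hs.
  rewrite <- sqrt_Rsqr_abs. apply sqrt_le_1_alt. unfold Rsqr.
  pose proof (sin2_cos2 (PI*s)). unfold Rsqr in H.
  assert (0 <= cos (PI*s) * cos (PI*s)) by nra.
  nra.
Qed.

Lemma Cmod_w_lb s t : Rabs t <= Cmod (RtoC s + Ci * RtoC t).
Proof.
  rewrite w_eq. unfold Cmod. simpl. rewrite <- sqrt_Rsqr_abs. apply sqrt_le_1_alt. unfold Rsqr. nra.
Qed.

Lemma Fk_bound z s t : 1 + 2 * Cmod z <= Rabs t ->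
  Cmod (Fk z s t) <= Cmod (Ccos (RtoC PI * z)) / (t * t).
Proof.
  intros Ht. pose proof (Cmod_ge_0 z) as Hz0. pose proof PI_gt3.
  unfold Fk, I_kernel.
  set (w := (RtoC s + Ci * RtoC t)%C).
  set (A := Ccos (RtoC PI * w)).
  set (cz := Ccos (RtoC PI * z)).
  pose proof (Ccos_lb s t) as HA. fold w A in HA.
  pose proof (Cmod_w_lb s t) as Hw. fold w in Hw.
  assert (HB : 3/4 * (Cmod w * Cmod w) <= Cmod (z * z - w * w)%C).
  { pose proof (Cmod_triangle (z*z)%C (-(z*z - w*w))%C) as T.
    replace (z * z + - (z * z - w * w))%C with (w * w)%C in T by ring.
    rewrite Cmod_opp, !Cmod_mult in T. nra. }
  assert (At : 0 < Cmod A) by (pose proof (Rabs_pos t); lra).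
  assert (Bt : 0 < Cmod (z * z - w * w)%C) by nra.
  assert (An : A <> 0%C) by (apply Cmod_gt_0; auto).
  assert (Bn : (z * z - w * w)%C <> 0%C) by (apply Cmod_gt_0; auto).
  assert (Cn : (2 * RtoC PI * Ci)%C <> 0%C).
  { apply Cmod_gt_0. rewrite !Cmod_mult, Cmod_Ci, !Cmod_R, !Rabs_pos_eq; lra. }
  unfold Cdiv. rewrite !Cmod_mult, Cmod_inv, Cmod_inv, Cmod_inv, Cmod_Ci; auto.
  rewrite !Cmod_mult, Cmod_Ci, !Cmod_R, !Rabs_pos_eq by lra.
  set (a := Cmod A) in *. set (b := Cmod (z * z - w * w)%C) in *. set (c := Cmod cz).
  set (m := Cmod w) in *.
  assert (0 <= c) by apply Cmod_ge_0.
  assert (Tp : 1 <= Rabs t) by lra.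
  assert (tt : t * t = Rabs t * Rabs t) by (rewrite <- Rabs_mult; rewrite Rabs_pos_eq; nra).
  rewrite tt. set (r := Rabs t) in *.
  assert (m1 : 0 < m) by lra.
  assert (X : / a <= / r) by (apply Rinv_le_contravar; lra).
  assert (Y : 2 * m * / b <= 8 / (3 * r)).
  { assert (Y1 : / b <= / (3/4*(m*m))) by (apply Rinv_le_contravar; nra).
    assert (Y2 : / (3*m) <= / (3*r)) by (apply Rinv_le_contravar; nra).
    replace (8/(3*r)) with (8 * /(3*r)) by (unfold Rdiv; ring).
    apply Rle_trans with (2*m * /(3/4*(m*m))). apply Rmult_le_compat_l; nra.
    replace (2*m*/(3/4*(m*m))) with (8 * /(3*m)) by (field; lra). apply Rmult_le_compat_l; lra. }
  assert (Pp : 0 < PI) by lra.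
  rewrite !Rmult_1_r.
  apply Rle_trans with (/ (2 * PI) * (c * / r * (8 / (3 * r)))).
  - apply Rmult_le_compat_l. left; apply Rinv_0_lt_compat; lra.
    apply Rmult_le_compat. apply Rmult_le_pos; auto. left; apply Rinv_0_lt_compat; lra.
    apply Rmult_le_pos. lra. left; apply Rinv_0_lt_compat; lra.
    apply Rmult_le_compat_l; auto. exact Y.
  - unfold Rdiv. apply Rle_trans with (c * / (r*r) * (4 / (3 * PI))).
    + right. field. lra.
    + rewrite <- (Rmult_1_r (c * / (r*r))) at 2. apply Rmult_le_compat_l.
      apply Rmult_le_pos; auto. left; apply Rinv_0_lt_compat; nra.
      apply Rmult_le_reg_r with (3*PI). lra. field_simplify; lra.
Qed.


Lemma normR (x : R) : norm x = Rabs x.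
Proof. reflexivity. Qed.

Lemma is_RInt_tail (M p q : R) : 0 < p <= q \/ p <= q < 0 ->
  is_RInt (fun t => M / (t * t)) p q (M * (/ p - / q)).
Proof.
  intros Hpq.
  assert (Hnz : forall t, Rmin p q <= t <= Rmax p q -> t <> 0).
  { intros t Ht. rewrite Rmin_left in Ht by lra. rewrite Rmax_right in Ht by lra. lra. }
  assert (H := is_RInt_derive (V:=R_CompleteNormedModule) (fun t => - M * / t) (fun t => M / (t * t)) p q).
  replace (M * (/ p - / q)) with (minus (- M * / q) (- M * / p))
    by (unfold minus, plus, opp; simpl; ring).
  apply H.
  - intros t Ht. pose proof (Hnz t Ht).
    eapply D_eq. apply D_mult. apply D_const. apply D_inv. apply D_id. auto.
    cbv beta. field. auto.
  - intros t Ht. pose proof (Hnz t Ht).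
    apply (ex_derive_continuous (K:=R_AbsRing) (V:=R_NormedModule)).
    eexists. apply D_mult. apply D_const. apply D_inv. apply D_mult; apply D_id. nra.
Qed.

Lemma tail_bound (g : R -> R) (M T0 p q : R) : 0 <= M -> 0 < T0 ->
  (forall t, continuous g t) ->
  (forall t, T0 <= Rabs t -> Rabs (g t) <= M / (t * t)) ->
  (T0 <= p <= q \/ p <= q <= - T0) ->
  Rabs (RInt g p q) <= M * (/ p - / q).
Proof.
  intros HM HT Hc Hb Hpq.
  rewrite <- normR.
  apply (norm_RInt_le g (fun t => M / (t * t)) p q). lra.
  - intros x Hx. apply Hb. destruct Hpq; [rewrite Rabs_pos_eq|rewrite Rabs_left]; lra.
  - apply (RInt_correct (V:=R_CompleteNormedModule)). apply (ex_RInt_continuous (V:=R_CompleteNormedModule)). auto.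
  - apply is_RInt_tail. lra.
Qed.

Lemma Rabs_le_iff x c : Rabs x <= c -> - c <= x <= c.
Proof. intros H. unfold Rabs in H; destruct Rcase_abs in H; lra. Qed.

Lemma aux1 (M e T : R) : 0 <= M -> e <= / T -> M * e <= M / T.
Proof. intros. unfold Rdiv. apply Rmult_le_compat_l; auto. Qed.

Lemma aux2 (be M x y z : R) : 0 < be < 1/2 -> x <= z -> y <= z -> 0 <= z -> 2*be*(x+y) <= 2*z.
Proof. intros. apply Rle_trans with (2*be*(2*z)). apply Rmult_le_compat_l; lra.
  assert (0 <= z*(1 - 2*be)) by (apply Rmult_le_pos; lra). lra. Qed.

Lemma key (g : R -> R -> R) (be M T0 : R) :
  0 < be < 1/2 -> 0 <= M -> 1 <= T0 ->
  (forall s t, g (-s) (-t) = - g s t) ->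
  (forall t, continuous (g be) t) ->
  (forall t, T0 <= Rabs t -> Rabs (g be t) <= M / (t*t)) ->
  (forall a b, T0 <= Rabs a -> T0 <= Rabs b ->
     Rabs (RInt (g be) a b - RInt (g (-be)) a b) <= 2*be*(M/(a*a) + M/(b*b))) ->
  forall eps, 0 < eps -> exists T, 0 < T /\
    forall a b, a < -T -> T < b -> Rabs (RInt (g be) a b) < eps.
Proof.
  intros Hbe HM HT0 Hodd Hc Hb HE eps Heps.
  exists (T0 + 3 * M / eps). assert (Hq : 0 <= 3 * M / eps) by (unfold Rdiv; apply Rmult_le_pos; [lra|left; apply Rinv_0_lt_compat; lra]).
  split. lra.
  set (T := T0 + 3 * M / eps). intros a b Ha Hb'.
  assert (T1 : T0 <= T) by (unfold T; lra).
  assert (Hex : forall p q, ex_RInt (g be) p q).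
  { intros p q. apply (ex_RInt_continuous (V:=R_CompleteNormedModule)). auto. }
  set (j := fun p q => RInt (g be) p q).
  assert (Hop : RInt (g (-be)) a b = - j (-b) (-a)).
  { assert (E1 : forall y, g (-be) y = opp (g be (-y))).
    { intros y. rewrite <- (Ropp_involutive y) at 1. rewrite Hodd. reflexivity. }
    assert (E2 : RInt (g (-be)) a b = RInt (fun y => opp (g be (-y))) a b).
    { apply RInt_ext. intros y _. apply E1. }
    assert (E3 : RInt (fun y => opp (g be (-y))) a b = RInt (g be) (-a) (-b)).
    { apply (is_RInt_unique (V:=R_CompleteNormedModule)). apply (is_RInt_comp_opp (V:=R_NormedModule) (g be)). apply (RInt_correct (V:=R_CompleteNormedModule)). auto. }
    assert (E4 : opp (RInt (g be) (-b) (-a)) = RInt (g be) (-a) (-b)).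
    { apply (opp_RInt_swap (V:=R_CompleteNormedModule)). auto. }
    rewrite E2, E3, <- E4. unfold j. reflexivity. }
  assert (Ch : forall p q, p < -T -> T < q -> j p q = j p (-T) + j (-T) T + j T q).
  { intros p q Hp Hq'. unfold j.
    rewrite <- (RInt_Chasles (V:=R_CompleteNormedModule) (g be) p T q); auto.
    rewrite <- (RInt_Chasles (V:=R_CompleteNormedModule) (g be) p (-T) T); auto. }
  pose proof (Ch a b Ha Hb') as C1. pose proof (Ch (-b) (-a) ltac:(lra) ltac:(lra)) as C2.
  assert (Tp : 0 < T) by lra.
  assert (B1 : Rabs (j a (-T)) <= M / T).
  { apply Rle_trans with (M * (/ a - / - T)). apply tail_bound with T0; [exact HM|lra|exact Hc|exact Hb|lra].
    rewrite <- Ropp_inv_permute by lra.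
    assert (/ a < 0) by (apply Rinv_lt_0_compat; lra). apply aux1; [exact HM|lra]. }
  assert (B2 : Rabs (j T b) <= M / T).
  { apply Rle_trans with (M * (/ T - / b)). apply tail_bound with T0; [exact HM|lra|exact Hc|exact Hb|lra].
    assert (0 < / b) by (apply Rinv_0_lt_compat; lra). apply aux1; [exact HM|lra]. }
  assert (B3 : Rabs (j (-b) (-T)) <= M / T).
  { apply Rle_trans with (M * (/ - b - / - T)). apply tail_bound with T0; [exact HM|lra|exact Hc|exact Hb|lra].
    rewrite <- !Ropp_inv_permute by lra.
    assert (0 < / b) by (apply Rinv_0_lt_compat; lra). apply aux1; [exact HM|lra]. }
  assert (B4 : Rabs (j T (-a)) <= M / T).
  { apply Rle_trans with (M * (/ T - / - a)). apply tail_bound with T0; [exact HM|lra|exact Hc|exact Hb|lra].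
    assert (0 < / - a) by (apply Rinv_0_lt_compat; lra). apply aux1; [exact HM|lra]. }
  assert (B5 : Rabs (j a b + j (-b) (-a)) <= 2 * M / T).
  { replace (j a b + j (-b) (-a)) with (RInt (g be) a b - RInt (g (-be)) a b) by (rewrite Hop; unfold j; ring).
    eapply Rle_trans. apply HE.
    rewrite Rabs_left; lra. rewrite Rabs_pos_eq; lra.
    assert (M / (a * a) <= M / T).
    { unfold Rdiv. apply Rmult_le_compat_l; auto. apply Rinv_le_contravar. lra. clear -Ha T1 HT0; nra. }
    assert (M / (b * b) <= M / T).
    { unfold Rdiv. apply Rmult_le_compat_l; auto. apply Rinv_le_contravar. lra. clear -Hb' T1 HT0; nra. }
    assert (0 <= M / T) by (unfold Rdiv; apply Rmult_le_pos; [lra|left; apply Rinv_0_lt_compat; lra]).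
    replace (2 * M / T) with (2 * (M / T)) by (unfold Rdiv; ring). apply (aux2 be M); auto. }
  assert (Fin : 3 * (M / T) < eps).
  { apply Rmult_lt_reg_r with T. lra. unfold Rdiv. rewrite Rmult_assoc, Rmult_assoc, Rinv_l by lra.
    unfold T. unfold Rdiv. rewrite Rmult_plus_distr_l.
    replace (eps * (3 * M * / eps)) with (3 * M) by (field; lra). clear -Heps HT0. nra. }
  apply Rabs_le_iff in B1. apply Rabs_le_iff in B2. apply Rabs_le_iff in B3. apply Rabs_le_iff in B4.
  apply Rabs_le_iff in B5.
  fold (j a b). apply Rabs_def1.
  - unfold Rdiv in *. lra.
  - unfold Rdiv in *. lra.
Qed.


Lemma im_le_Cmod (c : C) : Rabs (snd c) <= Cmod c.
Proof.
  unfold Cmod. rewrite <- sqrt_Rsqr_abs. apply sqrt_le_1_alt. unfold Rsqr. simpl. nra.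
Qed.

Lemma re_le_Cmod' (c : C) : Rabs (fst c) <= Cmod c.
Proof.
  unfold Cmod. rewrite <- sqrt_Rsqr_abs. apply sqrt_le_1_alt. unfold Rsqr. simpl. nra.
Qed.

Lemma Ebound (k : R -> R) (be B : R) : 0 < be ->
  (forall x, -be <= x <= be -> continuous k x) ->
  (forall x, -be <= x <= be -> Rabs (k x) <= B) ->
  Rabs (RInt k (-be) be) <= 2 * be * B.
Proof.
  intros Hb Hc Hk. rewrite <- normR.
  eapply Rle_trans.
  apply (norm_RInt_le k (fun _ => B) (-be) be). lra.
  - intros x Hx. rewrite normR. apply Hk; lra.
  - apply (RInt_correct (V:=R_CompleteNormedModule)). apply (ex_RInt_continuous (V:=R_CompleteNormedModule)).
    intros x Hx. rewrite Rmin_left in Hx by lra. rewrite Rmax_right in Hx by lra. apply Hc; lra.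
  - apply (is_RInt_const (V:=R_NormedModule)).
  - right. unfold scal; simpl. unfold mult; simpl. ring.
Qed.

Lemma key_F (be b1 : R) (z : C) (U V P : R -> R -> R) :
  0 < be -> be < b1 -> b1 < 1/2 ->
  (forall x t, -b1 < x < b1 -> is_derive (fun u => U u t) x (P x t)) ->
  (forall x t, -b1 < x < b1 -> is_derive (fun v => V x v) t (P x t)) ->
  (forall x t, -b1 < x < b1 -> continuity_2d_pt P x t) ->
  (forall x t, -b1 < x < b1 -> continuity_2d_pt U x t) ->
  (forall x t, -b1 < x < b1 -> continuity_2d_pt V x t) ->
  (forall s t, U (-s) (-t) = - U s t) ->
  (forall s t, 1 + 2 * Cmod z <= Rabs t -> Rabs (U s t) <= Cmod (Ccos (RtoC PI * z)) / (t * t)) ->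
  (forall s t, 1 + 2 * Cmod z <= Rabs t -> Rabs (V s t) <= Cmod (Ccos (RtoC PI * z)) / (t * t)) ->
  forall eps, 0 < eps -> exists T, 0 < T /\
    forall a b, a < -T -> T < b -> Rabs (RInt (U be) a b) < eps.
Proof.
  intros H0 H1 H2 HU HV HP CU CV Hodd BU BV.
  pose proof (Cmod_ge_0 z). pose proof (Cmod_ge_0 (Ccos (RtoC PI * z))).
  apply key with (M := Cmod (Ccos (RtoC PI * z))) (T0 := 1 + 2 * Cmod z); auto; try lra.
  - intros t. apply c2_v. apply CU. lra.
  - intros a b Ha Hb.
    change (RInt (U be) a b) with (RInt (fun t => U be t) a b).
    change (RInt (U (-be)) a b) with (RInt (fun t => U (-be) t) a b).
    rewrite (rect U V P (-b1) b1 (-be) be a b); try lra; auto.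
    apply Ebound. lra.
    + intros x Hx. apply (continuous_minus (fun x => V x b) (fun x => V x a)); apply c2_u; apply CV; lra.
    + intros x Hx. eapply Rle_trans. apply Rabs_triang. rewrite Rabs_Ropp.
      rewrite Rplus_comm. apply Rplus_le_compat; apply BV; auto.
Qed.

Lemma ball_pair (eps : posreal) (y1 y2 : R) : Rabs y1 < eps -> Rabs y2 < eps ->
  @ball (NormedModule.UniformSpace R_AbsRing C_R_NormedModule) (RtoC 0) eps (y1, y2).
Proof. intros H1 H2. split.
 - unfold ball; simpl. unfold AbsRing_ball, minus, plus, opp, abs; simpl. rewrite Ropp_0, Rplus_0_r. exact H1.
 - unfold ball; simpl. unfold AbsRing_ball, minus, plus, opp, abs; simpl. rewrite Ropp_0, Rplus_0_r. exact H2.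
Qed.

Lemma Hd1 (O : R -> R -> Prop) (F G : R -> R -> C) (HG : Hol O F G) x y : O x y -> is_derive (fun u => fst (F u y)) x (fst (G x y)).
Proof. intros H; apply (HG x y H). Qed.
Lemma Hd2 (O : R -> R -> Prop) (F G : R -> R -> C) (HG : Hol O F G) x y : O x y -> is_derive (fun u => snd (F u y)) x (snd (G x y)).
Proof. intros H; apply (HG x y H). Qed.
Lemma Hd3 (O : R -> R -> Prop) (F G : R -> R -> C) (HG : Hol O F G) x y : O x y -> is_derive (fun v => fst (F x v)) y (- snd (G x y)).
Proof. intros H; apply (HG x y H). Qed.
Lemma Hd4 (O : R -> R -> Prop) (F G : R -> R -> C) (HG : Hol O F G) x y : O x y -> is_derive (fun v => snd (F x v)) y (fst (G x y)).
Proof. intros H; apply (HG x y H). Qed.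
Lemma Hc1 (O : R -> R -> Prop) (F G : R -> R -> C) (HG : Hol O F G) x y : O x y -> continuity_2d_pt (fun u v => fst (F u v)) x y.
Proof. intros H; apply (HG x y H). Qed.
Lemma Hc2 (O : R -> R -> Prop) (F G : R -> R -> C) (HG : Hol O F G) x y : O x y -> continuity_2d_pt (fun u v => snd (F u v)) x y.
Proof. intros H; apply (HG x y H). Qed.
Lemma Hc3 (O : R -> R -> Prop) (F G : R -> R -> C) (HG : Hol O F G) x y : O x y -> continuity_2d_pt (fun u v => fst (G u v)) x y.
Proof. intros H; apply (HG x y H). Qed.
Lemma Hc4 (O : R -> R -> Prop) (F G : R -> R -> C) (HG : Hol O F G) x y : O x y -> continuity_2d_pt (fun u v => snd (G u v)) x y.
Proof. intros H; apply (HG x y H). Qed.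

Theorem corollary3p5 (beta : R) (hb0 : 0 < beta) (hb1 : beta < 1/2)
  (z : C) (hz : beta < Re z) :
  is_I_beta1 beta z (RtoC 0).
Proof.
  set (b1 := (beta + Rmin (1/2) (Re z)) / 2).
  assert (Hm1 : beta < Rmin (1/2) (Re z)) by (apply Rmin_glb_lt; lra).
  assert (Hm2 : Rmin (1/2) (Re z) <= 1/2) by apply Rmin_l.
  assert (Hm3 : Rmin (1/2) (Re z) <= Re z) by apply Rmin_r.
  assert (Hb1 : beta < b1) by (unfold b1; lra).
  assert (Hb2 : b1 < 1/2) by (unfold b1; lra).
  assert (Hb3 : b1 < Re z) by (unfold b1; lra).
  destruct (HolE_F z b1 Hb2 Hb3) as [G HG].
  assert (K1 : forall eps, 0 < eps -> exists T, 0 < T /\ forall a b, a < -T -> T < b ->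
     Rabs (RInt (fun t => fst (Fk z beta t)) a b) < eps).
  { apply (key_F beta b1 z (fun s t => fst (Fk z s t)) (fun s t => snd (Fk z s t)) (fun s t => fst (G s t))); try lra.
    - intros x t Hx. exact (Hd1 _ _ _ HG x t Hx).
    - intros x t Hx. exact (Hd4 _ _ _ HG x t Hx).
    - intros x t Hx. exact (Hc3 _ _ _ HG x t Hx).
    - intros x t Hx. exact (Hc1 _ _ _ HG x t Hx).
    - intros x t Hx. exact (Hc2 _ _ _ HG x t Hx).
    - intros s t. rewrite Fk_odd. reflexivity.
    - intros s t Ht. eapply Rle_trans; [apply re_le_Cmod'|apply Fk_bound; auto].
    - intros s t Ht. eapply Rle_trans; [apply im_le_Cmod|apply Fk_bound; auto]. }
  assert (K2 : forall eps, 0 < eps -> exists T, 0 < T /\ forall a b, a < -T -> T < b ->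
     Rabs (RInt (fun t => snd (Fk z beta t)) a b) < eps).
  { apply (key_F beta b1 z (fun s t => snd (Fk z s t)) (fun s t => - fst (Fk z s t)) (fun s t => snd (G s t))); try lra.
    - intros x t Hx. exact (Hd2 _ _ _ HG x t Hx).
    - intros x t Hx. eapply D_eq. apply D_opp. exact (Hd3 _ _ _ HG x t Hx). ring.
    - intros x t Hx. exact (Hc4 _ _ _ HG x t Hx).
    - intros x t Hx. exact (Hc2 _ _ _ HG x t Hx).
    - intros x t Hx. apply continuity_2d_pt_opp. exact (Hc1 _ _ _ HG x t Hx).
    - intros s t. rewrite Fk_odd. reflexivity.
    - intros s t Ht. eapply Rle_trans; [apply im_le_Cmod|apply Fk_bound; auto].
    - intros s t Ht. rewrite Rabs_Ropp. eapply Rle_trans; [apply re_le_Cmod'|apply Fk_bound; auto]. }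
  assert (Ex1 : forall a b, ex_RInt (fun t => fst (Fk z beta t)) a b).
  { intros a b. apply (ex_RInt_continuous (V:=R_CompleteNormedModule)). intros t _.
    apply (c2_v (fun u v => fst (Fk z u v))). apply (Hc1 _ _ _ HG beta t). lra. }
  assert (Ex2 : forall a b, ex_RInt (fun t => snd (Fk z beta t)) a b).
  { intros a b. apply (ex_RInt_continuous (V:=R_CompleteNormedModule)). intros t _.
    apply (c2_v (fun u v => snd (Fk z u v))). apply (Hc2 _ _ _ HG beta t). lra. }
  unfold is_I_beta1, is_RInt_gen, filterlimi, filtermapi.
  intros P [eps HP].
  destruct (K1 eps (cond_pos eps)) as [T1 [T1p L1]].
  destruct (K2 eps (cond_pos eps)) as [T2 [T2p L2]].
  set (T := Rmax T1 T2).
  assert (TT1 : T1 <= T) by apply Rmax_l. assert (TT2 : T2 <= T) by apply Rmax_r.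
  apply Filter_prod with (fun a => a < - T) (fun b => T < b).
  - exists (- T). auto.
  - exists T. auto.
  - intros a b Ha Hb. simpl.
    exists (RInt (fun t => fst (Fk z beta t)) a b, RInt (fun t => snd (Fk z beta t)) a b).
    split.
    + change (fun t : R => (/ (2 * RtoC PI * Ci) * (I_kernel z (RtoC beta + Ci * RtoC t) * Ci))%C) with (Fk z beta).
      apply (is_RInt_fct_extend_pair (U:=R_NormedModule) (V:=R_NormedModule)).
      * apply (RInt_correct (V:=R_CompleteNormedModule)). auto.
      * apply (RInt_correct (V:=R_CompleteNormedModule)). auto.
    + apply HP. apply ball_pair.
      * apply L1; lra.
      * apply L2; lra.
Qed.
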